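(* Let $\tau,t\in\mathbb{R}$ and let $P_n(x;\tau,t)$ be the monic orthogonal polynomials for the weight $\omega(x;\tau,t)=\exp(-x^6+\tau x^4+tx^2)$ on $\mathbb{R}$, with recurrence coefficients $\beta_n$. Then for $n\ge1$ $$\frac{dP_n}{dx}(x;\tau,t)=-B_n(x;\tau,t)P_n(x;\tau,t)+A_n(x;\tau,t)P_{n-1}(x;\tau,t),$$ where $$A_n(x;\tau,t)=\beta_n\big\{6x^4-4\tau x^2-2t+(6x^2-4\tau)(\beta_n+\beta_{n+1})\big\}+6\beta_n\big\{\beta_n(\beta_{n-1}+\beta_n+\beta_{n+1})+\beta_{n+1}(\beta_n+\beta_{n+1}+\beta_{n+2})\big\},$$ $$B_n(x;\tau,t)=\beta_n\big\{6x^3-4\tau x+6x(\beta_{n-1}+\beta_n+\beta_{n+1})\big\}.$$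
   Context: The monic polynomials $P_n(x;\tau,t)$ of exact degree $n$ are orthogonal with respect to $\omega(x;\tau,t)$ on $\mathbb{R}$. They satisfy $P_{n+1}(x)=xP_n(x)-\beta_nP_{n-1}(x)$ with $P_{-1}=0$, $P_0=1$, where $\beta_n>0$ for $n\ge1$. The convention $\beta_0=0$ is used. *)

(* Defs.v *)
From HB Require Import structures.
From mathcomp Require Import all_boot all_order all_algebra.
From mathcomp Require Import all_classical all_reals all_analysis.
Set Implicit Arguments. Unset Strict Implicit. Unset Printing Implicit Defensive.
Import Order.TTheory GRing.Theory Num.Theory.
Local Open Scope ring_scope.

Definition weight (R : realType) (tau t : R) (x : R) : R :=
  expR (- x ^+ 6 + tau * x ^+ 4 + t * x ^+ 2).

Definition monic_OPS (R : realType) (tau t : R) (P : nat -> {poly R}) : Prop :=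
  (forall n, P n \is monic /\ size (P n) = n.+1) /\
  (forall n m, n <> m ->
     (\int[@lebesgue_measure R]_(x in [set: R])
         ((P n).[x] * (P m).[x] * weight tau t x)%:E = 0)%E).

(* beta are the recurrence coefficients: P_{n+1} = x P_n - beta_n P_{n-1},
   with P_{-1} = 0 and the convention beta_0 = 0. *)
Definition recurrence_coeffs (R : realType) (P : nat -> {poly R}) (beta : nat -> R)
  : Prop :=
  beta 0%N = 0 /\
  P 1%N = 'X * P 0%N /\
  (forall n, (1 <= n)%N -> P n.+1 = 'X * P n - beta n *: P n.-1).

(* Main.v *)
Require Import Defs.
From HB Require Import structures.
From mathcomp Require Import all_boot all_order all_algebra.
From mathcomp Require Import all_classical all_reals all_analysis.
From mathcomp Require Import ring lra zify measurable_realfun.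
Import Order.TTheory GRing.Theory Num.Theory.
Import numFieldNormedType.Exports.
Local Open Scope classical_set_scope.
Local Open Scope ring_scope.

Fixpoint mom {R : nzRingType} (b h : nat -> R) (a k j : nat) : R :=
  match a with
  | 0 => if k == j then h j else 0
  | a'.+1 => mom b h a' k j.+1 + b j * mom b h a' k j.-1
  end.

Lemma mom_far {R : nzRingType} (b h : nat -> R) a k j :
  (a < k - j)%N -> mom b h a k j = 0.
Proof.
elim: a j => [|a IH] j /= H.
  by case: eqP => // E; move: H; rewrite E subnn.
rewrite !IH ?mulr0 ?addr0 //; lia.
Qed.

Ltac eqF := repeat match goal with
  | |- context [(?x == ?y)] =>
      first [ rewrite (eqxx x) | have -> : (x == y) = false by (apply/eqP; lia) ]
  end.


Definition keyexpr {R : comRingType} (b h : nat -> R) (tau t : R) (m j : nat) : R :=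
  let n := m.+1 in
  let cB := -4*tau + 6*(b m + b n + b n.+1) in
  let a2 := -4*tau + 6*(b n + b n.+1) in
  let a0 := -2*t - 4*tau*(b n + b n.+1)
            + 6*(b n*(b m + b n + b n.+1) + b n.+1*(b n + b n.+1 + b n.+2)) in
  (if (j < n)%N then 6 * mom b h 5 n j - 4*tau * mom b h 3 n j - 2*t*mom b h 1 n j else 0)
  + b n * (6 * mom b h 3 n j + cB * mom b h 1 n j)
  - b n * (6 * mom b h 4 m j + a2 * mom b h 2 m j + a0 * mom b h 0 m j).

Ltac finish b0 hS := rewrite /=; eqF; rewrite ?hS ?b0; ring.

Lemma key {R : comRingType} (b h : nat -> R) (tau t : R)
  (b0 : b 0%N = 0) (hS : forall k, h k.+1 = b k.+1 * h k) m j :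
  (j < m + 5)%N -> keyexpr b h tau t m j = 0.
Proof.
move=> Hj; rewrite /keyexpr; cbv zeta.
have [far|near] := leqP (j + 5) m.
  by rewrite !(@mom_far _ b h); try lia; case: ifP => _; ring.
case: ifP => Hlt.
  have : (m - j <= 4)%N by lia.
  case E: (m - j)%N => [|[|[|[|[|e]]]]] // _.
  - have -> : m = j by lia.
    by case: j {Hj near Hlt E} => [|[|[|[|[|i]]]]]; finish b0 hS.
  - have -> : m = j.+1 by lia.
    by case: j {Hj near Hlt E} => [|[|[|[|[|i]]]]]; finish b0 hS.
  - have -> : m = j.+2 by lia.
    by case: j {Hj near Hlt E} => [|[|[|[|[|i]]]]]; finish b0 hS.
  - have -> : m = j.+3 by lia.
    by case: j {Hj near Hlt E} => [|[|[|[|[|i]]]]]; finish b0 hS.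
  - have -> : m = j.+4 by lia.
    by case: j {Hj near Hlt E} => [|[|[|[|[|i]]]]]; finish b0 hS.
have : (1 <= j - m <= 4)%N by lia.
case E: (j - m)%N => [|[|[|[|[|e]]]]] // _.
- have -> : j = m.+1 by lia.
  by case: m {Hj near Hlt E} => [|[|[|[|[|i]]]]]; finish b0 hS.
- have -> : j = m.+2 by lia.
  by case: m {Hj near Hlt E} => [|[|[|[|[|i]]]]]; finish b0 hS.
- have -> : j = m.+3 by lia.
  by case: m {Hj near Hlt E} => [|[|[|[|[|i]]]]]; finish b0 hS.
- have -> : j = m.+4 by lia.
  by case: m {Hj near Hlt E} => [|[|[|[|[|i]]]]]; finish b0 hS.
Qed.

Lemma size_deriv_le {R : nzRingType} (p : {poly R}) N :
  (size p <= N.+1)%N -> (size p^`() <= N)%N.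
Proof.
move=> /leq_sizeP H; apply/leq_sizeP => i Hi.
by rewrite coef_deriv H ?mul0rn.
Qed.

Section Alg.
Variable R : realFieldType.
Variables (tau t : R) (P : nat -> {poly R}) (b : nat -> R) (L : {poly R} -> R).
Hypothesis LD : forall p q, L (p + q) = L p + L q.
Hypothesis LZ : forall c p, L (c%:P * p) = c * L p.
Hypothesis Lorth : forall n m, n <> m -> L (P n * P m) = 0.
Hypothesis L1 : 0 < L 1.
Hypothesis LIBP : forall p, L p^`() =
  L (p * ((6:R)%:P * 'X^5 - (4 * tau)%:P * 'X^3 - (2 * t)%:P * 'X)).
Hypothesis Pmon : forall n, P n \is monic.
Hypothesis Psize : forall n, size (P n) = n.+1.
Hypothesis b0 : b 0%N = 0.
Hypothesis P1 : P 1%N = 'X * P 0%N.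
Hypothesis Prec : forall n, (1 <= n)%N -> P n.+1 = 'X * P n - b n *: P n.-1.
Hypothesis bpos : forall n, (1 <= n)%N -> 0 < b n.

Lemma L0 : L 0 = 0.
Proof. have := LZ 0 0. by rewrite polyC0 !mul0r. Qed.

Lemma LB p q : L (p - q) = L p - L q.
Proof.
by rewrite LD -mulN1r -polyCN LZ mulN1r.
Qed.

Lemma Xrec k : 'X * P k = P k.+1 + (b k)%:P * P k.-1.
Proof.
case: k => [|k]; first by rewrite b0 P1 polyC0 mul0r addr0.
by rewrite (Prec k.+1) // -mul_polyC subrK.
Qed.

Definition M a k j := L ('X^a * P k * P j).
Definition hh j := L (P j * P j).

Lemma Mrec a k j : M a.+1 k j = M a k j.+1 + b j * M a k j.-1.
Proof.
rewrite /M.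
have -> : 'X^(a.+1) * P k * P j =
   'X^a * P k * P j.+1 + (b j)%:P * ('X^a * P k * P j.-1).
  rewrite exprS (_ : P j.+1 = 'X * P j - (b j)%:P * P j.-1); first ring.
  by rewrite Xrec; ring.
by rewrite LD LZ.
Qed.

Lemma M_mom a k j : M a k j = mom b hh a k j.
Proof.
elim: a j => [|a IH] j /=.
  rewrite /M expr0 mul1r; case: eqP => [->|ne] //.
  exact: Lorth.
by rewrite Mrec !IH.
Qed.

Lemma Msym a k j : M a k j = M a j k.
Proof. by rewrite /M mulrAC. Qed.

Lemma hS k : hh k.+1 = b k.+1 * hh k.
Proof.
have e1 := M_mom 1 k.+1 k.
rewrite Msym M_mom /= in e1.
move: e1; eqF; rewrite mulr0 addr0 add0r => ->; done.
Qed.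

Lemma P0E : P 0%N = 1.
Proof.
have := Psize 0; move=> Hs.
rewrite (size1_polyC (eq_leq Hs)).
have := Pmon 0 => /monicP; rewrite lead_coefE Hs /= => ->.
done.
Qed.

Lemma hpos k : 0 < hh k.
Proof.
elim: k => [|k IH]; first by rewrite /hh P0E mulr1.
by rewrite hS mulr_gt0 // bpos.
Qed.

Lemma reduce_step (q : {poly R}) N : (size q <= N.+1)%N ->
  (size (q - (q`_N)%:P * P N)%R <= N)%N.
Proof.
move=> /leq_sizeP Hq; apply/leq_sizeP => i Hi.
rewrite coefB coefCM.
case: (ltngtP i N) => [|lt|->]; first lia.
  by rewrite (Hq i) // (@nth_default _ 0 (P N) i) ?Psize // mulr0 subr0.
have := Pmon N => /monicP; rewrite lead_coefE Psize /= => ->.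
by rewrite mulr1 subrr.
Qed.

Lemma orth_low n N (q : {poly R}) : (size q <= N)%N -> (N <= n)%N -> L (P n * q) = 0.
Proof.
elim: N q => [|N IH] q Hq HN.
  by move: Hq; rewrite leqn0 size_poly_eq0 => /eqP ->; rewrite mulr0 L0.
have -> : P n * q = P n * (q - (q`_N)%:P * P N) + (q`_N)%:P * (P n * P N) by ring.
rewrite LD LZ IH ?reduce_step //; last by lia.
by rewrite Lorth ?mulr0 ?addr0 //; lia.
Qed.

Lemma zero_crit N (q : {poly R}) : (size q <= N)%N ->
  (forall j, (j < N)%N -> L (q * P j) = 0) -> q = 0.
Proof.
elim: N q => [|N IH] q Hq HL.
  by move: Hq; rewrite leqn0 size_poly_eq0 => /eqP ->.
have E : q - (q`_N)%:P * P N = 0.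
  apply: IH; first exact: reduce_step.
  move=> j Hj.
  have -> : (q - (q`_N)%:P * P N) * P j = q * P j - (q`_N)%:P * (P N * P j) by ring.
  by rewrite LB LZ HL ?Lorth ?mulr0 ?subr0 //; lia.
have Eq : q = (q`_N)%:P * P N by apply/eqP; rewrite -subr_eq0 E.
have := HL N (ltnSn N).
rewrite {1}Eq -mulrA LZ => /eqP; rewrite mulf_eq0 => /orP[/eqP c0|].
  by rewrite Eq c0 mul0r.
by rewrite gt_eqF // hpos.
Qed.

Lemma M_mom' a k j : L ('X^a * P k * P j) = mom b hh a k j.
Proof. exact: M_mom. Qed.

Lemma sz_add (p q : {poly R}) N : (size p <= N)%N -> (size q <= N)%N -> (size (p + q)%R <= N)%N.
Proof. by move=> Hp Hq; rewrite (leq_trans (size_add _ _)) // geq_max Hp Hq. Qed.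

Lemma sz_sub (p q : {poly R}) N : (size p <= N)%N -> (size q <= N)%N -> (size (p - q)%R <= N)%N.
Proof. by move=> Hp Hq; rewrite sz_add // size_opp. Qed.

Lemma sz_mul (p q : {poly R}) a c N : (size p <= a.+1)%N -> (size q <= c.+1)%N ->
  (a + c < N)%N -> (size (p * q)%R <= N)%N.
Proof.
move=> Hp Hq HN; rewrite (leq_trans (size_mul_leq _ _)) //.
have : (size p + size q <= a.+1 + c.+1)%N by apply: leq_add.
lia.
Qed.

Lemma sCX (c : R) k N : (k < N)%N -> (size (c%:P * 'X^k)%R <= N)%N.
Proof.
by move=> H; rewrite mul_polyC (leq_trans (size_scale_leq _ _)) // size_polyXn.
Qed.

Lemma main_alg m x :
  let n := m.+1 in
  let An := b n * (6 * x ^+ 4 - 4 * tau * x ^+ 2 - 2 * t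
                        + (6 * x ^+ 2 - 4 * tau) * (b n + b n.+1))
              + 6 * b n * (b n * (b n.-1 + b n + b n.+1)
                              + b n.+1 * (b n + b n.+1 + b n.+2)) in
  let Bn := b n * (6 * x ^+ 3 - 4 * tau * x
                        + 6 * x * (b n.-1 + b n + b n.+1)) in
  (P n)^`().[x] = - Bn * (P n).[x] + An * (P n.-1).[x].
Proof.
move=> n An Bn.
rewrite /= in An Bn *.
pose cB := -4*tau + 6*(b m + b n + b n.+1).
pose a2 := -4*tau + 6*(b n + b n.+1).
pose a0 := -2*t - 4*tau*(b n + b n.+1)
            + 6*(b n*(b m + b n + b n.+1) + b n.+1*(b n + b n.+1 + b n.+2)).
pose Bp := (b n * 6)%:P * 'X^3 + (b n * cB)%:P * 'X^1.
pose Ap := (b n * 6)%:P * 'X^4 + (b n * a2)%:P * 'X^2 + (b n * a0)%:P * 'X^0.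
pose Q := (P n)^`() + Bp * P n - Ap * P m.
have Q0 : Q = 0.
  apply: (@zero_crit (m + 5)%N).
    apply: sz_sub; first apply: sz_add.
    - apply: (@leq_trans n); last by lia.
      by apply: size_deriv_le; rewrite Psize.
    - apply: (@sz_mul _ _ 3 n); last by rewrite /n; lia.
        by apply: sz_add; apply: sCX.
      by rewrite Psize.
    - apply: (@sz_mul _ _ 4 m); last by lia.
        by apply: sz_add; [apply: sz_add|]; apply: sCX.
      by rewrite Psize.
  move=> j Hj.
  have E : Q * P j = (P n)^`() * P j + (b n*6)%:P * ('X^3 * P n * P j)
     + (b n * cB)%:P * ('X^1 * P n * P j)
     - ((b n*6)%:P * ('X^4 * P m * P j) + (b n*a2)%:P*('X^2*P m*P j)
        + (b n*a0)%:P*('X^0*P m*P j)).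
    by rewrite /Q /Bp /Ap; ring.
  have D : L ((P n)^`() * P j) = if (j < n)%N then
      6 * mom b hh 5 n j - 4*tau * mom b hh 3 n j - 2*t*mom b hh 1 n j else 0.
    case: ifP => H.
      have := LIBP (P n * P j); rewrite derivM LD.
      rewrite (@orth_low n j); last by lia.
        rewrite addr0 => ->.
        have -> : P n * P j * ((6:R)%:P * 'X^5 - (4 * tau)%:P * 'X^3 - (2 * t)%:P * 'X)
          = (6:R)%:P * ('X^5 * P n * P j) - (4 * tau)%:P * ('X^3 * P n * P j)
            - (2 * t)%:P * ('X^1 * P n * P j) by ring.
        by rewrite !LB !LZ !M_mom'.
      by apply: size_deriv_le; rewrite Psize.
    rewrite mulrC (@orth_low j n) //; last by lia.
    by apply: size_deriv_le; rewrite Psize.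
  rewrite E LB !LD D !LZ !M_mom'.
  transitivity (keyexpr b hh tau t m j); last first.
    exact: (@key _ b hh tau t b0 hS m j Hj).
  rewrite /keyexpr /cB /a2 /a0; cbv zeta.
  case: ifP => _; ring.
transitivity ((P n)^`().[x] - Q.[x]); first by rewrite Q0 horner0 subr0.
rewrite /Q /Bp /Ap /An /Bn /cB /a2 /a0 !(hornerD, hornerN, hornerM, hornerC, hornerXn, hornerX); ring.
Qed.

End Alg.
Lemma cubic_bound {R : realType} (a s u : R) : 0 <= u ->
  - u ^+ 3 + a * u ^+ 2 + s * u <=
  `|a| * (1 + `|a| + `|s|) ^+ 2 + `|s| * (1 + `|a| + `|s|).
Proof.
move=> u0.
have ha : a * u ^+ 2 <= `|a| * u ^+ 2 by rewrite ler_wpM2r ?sqr_ge0 ?ler_norm.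
have hs : s * u <= `|s| * u by rewrite ler_wpM2r ?ler_norm.
have A0 := normr_ge0 a; have S0 := normr_ge0 s.
set A := `|a| in ha A0 *; set S := `|s| in hs S0 *.
have [uM|Mu] := leP u (1 + A + S).
  have h1 : A * u ^+ 2 <= A * (1 + A + S) ^+ 2.
    by rewrite ler_wpM2l // ler_sqr ?nnegrE //; lra.
  have h2 : S * u <= S * (1 + A + S) by rewrite ler_wpM2l.
  have h3 : 0 <= u ^+ 3 by rewrite exprn_ge0.
  lra.
have u1 : 1 <= u by lra.
have h1 : (1 + A + S) * u ^+ 2 <= u ^+ 3.
  have hM : 0 <= u - (1 + A + S) by lra.
  have := mulr_ge0 hM (sqr_ge0 u).
  rewrite (_ : u ^+ 3 = u * u ^+ 2); last by rewrite exprS.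
  lra.
have h2 : u <= u ^+ 2 by rewrite expr2 ler_peMr //; lra.
have h3 : S * u <= S * u ^+ 2 by rewrite ler_wpM2l.
have h4 : 0 <= A * (1 + A + S) ^+ 2 + S * (1 + A + S).
  by rewrite addr_ge0 // mulr_ge0 // ?sqr_ge0; lra.
nra.
Qed.

Lemma bound_poly {R : realType} (p : {poly R}) :
  exists K (k : nat), 0 <= K /\ forall x, `|p.[x]| <= K * expR (k%:R * x ^+ 2).
Proof.
elim/poly_ind: p => [|p c [K [k [K0 HK]]]].
  by exists 0, 0%N; split => // x; rewrite horner0 normr0 mul0r.
exists (K + `|c|), k.+1; split; first by rewrite addr_ge0.
move=> x; rewrite hornerD hornerMX hornerC.
have ex1 : `|x| <= expR (x ^+ 2).
  have := expR_ge1Dx (x ^+ 2).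
  have : `|x| <= 1 + x ^+ 2.
    rewrite -(real_normK (num_real x)); have := sqr_ge0 (`|x| - 1); have := normr_ge0 x; nra.
  lra.
have eS : expR (k.+1%:R * x ^+ 2) = expR (k%:R * x ^+ 2) * expR (x ^+ 2).
  by rewrite -expRD -[in LHS]addn1 natrD mulrDl mul1r.
have e1 : 1 <= expR (k.+1%:R * x ^+ 2).
  have := expR_ge1Dx (k.+1%:R * x ^+ 2).
  have : 0 <= k.+1%:R * x ^+ 2 :> R by rewrite mulr_ge0 ?sqr_ge0.
  lra.
have := HK x; have Ep := expR_ge0 (k%:R * x ^+ 2); have Ex := expR_ge0 (x ^+ 2).
move=> Hp.
rewrite (le_trans (ler_normD _ _)) // normrM mulrDl eS.
have c0 := normr_ge0 c; have p0 := normr_ge0 p.[x]; have x0 := normr_ge0 x.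
have : `|p.[x]| * `|x| <= K * expR (k%:R * x ^+ 2) * expR (x ^+ 2).
  apply: ler_pM => //.
have : `|c| <= `|c| * (expR (k%:R * x ^+ 2) * expR (x ^+ 2)).
  by rewrite -eS ler_peMr.
lra.
Qed.

Lemma scaleRE {R : realType} (a b : R) : a *: b = a * b.
Proof. by []. Qed.

Section Ana.
Context {R : realType}.
Variables tau t : R.
Notation mu := (@lebesgue_measure R).

Definition wpoly : {poly R} := (-1)%:P * 'X^6 + tau%:P * 'X^4 + t%:P * 'X^2.

Lemma w_eq x : weight tau t x = expR wpoly.[x].
Proof.
rewrite /weight /wpoly; congr expR.
rewrite !(hornerD, hornerN, hornerM, hornerC, hornerXn, hornerX); ring.
Qed.

Lemma cont_w : continuous (weight tau t).
Proof.
have -> : weight tau t = expR \o horner wpoly by apply/funext => x; rewrite w_eq.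
move=> x; apply: continuous_comp; [exact: continuous_horner | exact: continuous_expR].
Qed.

Lemma cont_pw (p : {poly R}) : continuous (fun x => p.[x] * weight tau t x).
Proof.
move=> x; apply: continuousM; [exact: continuous_horner | exact: cont_w].
Qed.

Lemma bound_pw (p : {poly R}) :
  exists K, 0 <= K /\ forall x, `|p.[x] * weight tau t x| <= K * gauss_fun x.
Proof.
have [K [k [K0 HK]]] := bound_poly p.
pose s := k%:R + t + 1.
pose C := `|tau| * (1 + `|tau| + `|s|) ^+ 2 + `|s| * (1 + `|tau| + `|s|).
exists (K * expR C); split; first by rewrite mulr_ge0 // expR_ge0.
move=> x; rewrite normrM (ger0_norm (expR_ge0 _)).
apply: (le_trans (ler_wpM2r (expR_ge0 _) (HK x))).
rewrite -[leLHS]mulrA -[leRHS]mulrA; apply: (ler_wpM2l K0).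
rewrite /gauss_fun -!expRD ler_expR.
have := @cubic_bound R tau s (x ^+ 2) (sqr_ge0 x).
rewrite -/C /s.
have -> : x ^+ 6 = (x ^+ 2) ^+ 3 by rewrite -exprM.
have -> : x ^+ 4 = (x ^+ 2) ^+ 2 by rewrite -exprM.
lra.
Qed.

Lemma meas_pw (p : {poly R}) :
  measurable_fun [set: R] (EFin \o (fun x => p.[x] * weight tau t x)).
Proof. apply/measurable_EFinP; exact: continuous_measurable_fun (cont_pw p). Qed.

Lemma int_pw (p : {poly R}) :
  mu.-integrable setT (EFin \o (fun x => p.[x] * weight tau t x)).
Proof.
have [K [K0 HK]] := bound_pw p.
have ig : mu.-integrable [set: R] (fun x => (K%:E * (EFin \o gauss_fun) x)%E).
  by apply: integrableZl => //; exact: integrableT_gauss.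
apply: le_integrable ig => //; first exact: meas_pw.
move=> x _ /=.
rewrite lee_fin (ger0_norm (mulr_ge0 K0 (gauss_fun_ge0 x))).
exact: HK.
Qed.

Definition LL (p : {poly R}) : R := Rintegral mu setT (fun x => p.[x] * weight tau t x).

Lemma LL_D p q : LL (p + q) = LL p + LL q.
Proof.
rewrite /LL -RintegralD //; try exact: int_pw.
by apply: eq_Rintegral => x _; rewrite hornerD mulrDl.
Qed.

Lemma LL_Z c p : LL (c%:P * p) = c * LL p.
Proof.
rewrite /LL -RintegralZl //; last exact: int_pw.
by apply: eq_Rintegral => x _; rewrite hornerM hornerC mulrA.
Qed.

Lemma LL_orth (p q : {poly R}) :
  (\int[mu]_(x in [set: R]) (p.[x] * q.[x] * weight tau t x)%:E)%E = 0%E ->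
  LL (p * q) = 0.
Proof.
move=> H; rewrite /LL /Rintegral.
under eq_integral => x _ do rewrite hornerM.
by rewrite H.
Qed.

Definition Vp : {poly R} := (6:R)%:P * 'X^5 - (4 * tau)%:P * 'X^3 - (2 * t)%:P * 'X.

Lemma wpoly_deriv x : wpoly^`().[x] = - Vp.[x].
Proof.
rewrite /wpoly /Vp !mul_polyC !derivD !derivZ !derivXn.
rewrite !(hornerD, hornerN, hornerZ, hornerMn, hornerXn, hornerX).
ring.
Qed.

Lemma deriv_F (p : {poly R}) (x : R) :
  is_derive x (1:R) (fun y => p.[y] * weight tau t y)
    ((p^`() - p * Vp).[x] * weight tau t x).
Proof.
have e : (fun y => p.[y] * weight tau t y) = (horner p * (expR \o horner wpoly)).
  by apply/funext => y /=; rewrite w_eq.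
have d1 : is_derive x 1 (horner p) p^`().[x] by exact: is_derive_poly.
have d2 : is_derive x 1 (expR \o horner wpoly) (expR wpoly.[x] * wpoly^`().[x]).
  by apply: is_derive1_comp; exact: is_derive_poly.
have := is_deriveM d1 d2.
rewrite -e wpoly_deriv -w_eq hornerD hornerN hornerM.
have -> : (expR \o horner wpoly) x = weight tau t x by rewrite /= w_eq.
rewrite !scaleRE.
have -> : (p^`().[x] - p.[x] * Vp.[x]) * weight tau t x =
  p.[x] * (weight tau t x * - Vp.[x]) + weight tau t x * p^`().[x] by ring.
done.
Qed.

Lemma ftc_F (p : {poly R}) (a b : R) : a < b ->
  (\int[mu]_(x in `[a, b]) ((p^`() - p * Vp).[x] * weight tau t x)%:E)%E =
  ((p.[b] * weight tau t b)%:E - (p.[a] * weight tau t a)%:E)%E.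
Proof.
move=> ab.
apply: (@continuous_FTC2 R (fun x => (p^`() - p * Vp).[x] * weight tau t x)
   (fun x => p.[x] * weight tau t x) a b ab).
- by apply: continuous_subspaceT => x; exact: cont_pw.
- split.
  + by move=> x _; case: (deriv_F p x).
  + by apply: cvg_at_right_filter; exact: cont_pw.
  + by apply: cvg_at_left_filter; exact: cont_pw.
- by move=> x _; case: (deriv_F p x) => _ <-; rewrite derive1E.
Qed.

Lemma gauss_le_inv (y : R) : 1 <= `|y| -> gauss_fun y <= `|y|^-1.
Proof.
move=> y1.
have hy : `|y| <= expR (y ^+ 2).
  have := expR_ge1Dx (y ^+ 2).
  have : `|y| <= 1 + y ^+ 2.
    rewrite -(real_normK (num_real y)); have := sqr_ge0 (`|y| - 1); have := normr_ge0 y; nra.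
  lra.
rewrite /gauss_fun expRN lef_pV2 ?posrE ?expR_gt0 //.
lra.
Qed.

Lemma int_deriv_zero (p : {poly R}) :
  (\int[mu]_(x in [set: R]) ((p^`() - p * Vp).[x] * weight tau t x)%:E)%E = 0%E.
Proof.
set r := p^`() - p * Vp.
pose g := fun x => r.[x] * weight tau t x.
pose F := fun x => p.[x] * weight tau t x.
have [K [K0 HK]] := bound_pw r.
have [K' [K0' HK']] := bound_pw p.
pose D k := `[- (k.+1%:R), (k.+1%:R)]%classic : set R.
pose f_ := fun k => (EFin \o g) \_ (D k).
pose u := fun k : nat => F (k.+1%:R) - F (- (k.+1%:R)).
have Ef : forall k, (\int[mu]_(x in [set: R]) f_ k x)%E = (u k)%:E.
  move=> k; rewrite /f_ -integral_mkcond /D ftc_F //.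
  have h : (0:R) < k.+1%:R := ltr0Sn _ _.
  lra.
have ig : mu.-integrable [set: R] (fun x => (K * gauss_fun x)%:E).
  exact: (integrableZl measurableT K (@integrableT_gauss R)).
have mf_ : forall k, measurable_fun [set: R] (f_ k).
  move=> k; apply: (measurable_restrictT (EFin \o g) (measurable_itv _)).1.
  exact: measurable_funTS (meas_pw r).
have f_f : forall x, [set: R] x -> f_ ^~ x @ \oo --> (EFin \o g) x.
  move=> x _; apply: cvg_near_cst.
  have hN := archi_boundP (normr_ge0 x).
  exists (Num.bound `|x|) => // k /= Hk.
  rewrite /f_ patchE ifT //; apply: mem_set; rewrite /D /= in_itv /=.
  have := ler_norm x; have := ler_norm (-x); rewrite normrN.
  have : ((Num.bound `|x|)%:R <= k.+1%:R :> R) by rewrite ler_nat; lia.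
  lra.
have fing : forall x, [set: R] x -> (fun x => (K * gauss_fun x)%:E) x \is a fin_num.
  by [].
have absfg : forall k x, [set: R] x -> (`|f_ k x| <= (fun x => (K * gauss_fun x)%:E) x)%E.
  move=> k x _; rewrite /f_ patchE; case: ifP => _ /=.
    by rewrite lee_fin; exact: HK.
  by rewrite normr0 lee_fin mulr_ge0 // gauss_fun_ge0.
have H1 := @dominated_cvg _ _ _ mu _ measurableT _ _ _ mf_ f_f fing ig absfg.
have bF : forall k : nat, forall y : R, `|y| = k.+1%:R ->
    `|F y| <= K' * harmonic k.
  move=> k y hy.
  apply: (le_trans (HK' y)); apply: ler_wpM2l => //.
  rewrite /harmonic /= -hy; apply: gauss_le_inv.
  by rewrite hy ler1n.
have hu : u k @[k --> \oo] --> (0:R).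
  apply: (@squeeze_cvgr _ _ _ _ (fun k => - (2 * K') * harmonic k)
            (fun k => (2 * K') * harmonic k)).
  - apply: nearW => k.
    have h1 := bF k (k.+1%:R) (ger0_norm (ler0n _ _)).
    have hn : `|- (k.+1%:R : R)| = k.+1%:R by rewrite normrN ger0_norm.
    have h2 := bF k (- k.+1%:R) hn.
    have := ler_norm (F k.+1%:R); have := ler_norm (- F k.+1%:R).
    have := ler_norm (F (- k.+1%:R)); have := ler_norm (- F (- k.+1%:R)).
    rewrite !normrN /u; lra.
  - rewrite -(mulr0 (- (2 * K'))); apply: cvgMr; exact: cvg_harmonic.
  - rewrite -(mulr0 (2 * K')); apply: cvgMr; exact: cvg_harmonic.
have H2 : (u k)%:E @[k --> \oo] --> 0%E.
  by apply: cvg_EFin; [exact: nearW | exact: hu].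
have := cvg_lim (@ereal_hausdorff R) H1.
under eq_fun do rewrite Ef.
rewrite (cvg_lim (@ereal_hausdorff R) H2) => <-.
done.
Qed.

Lemma LL_IBP (p : {poly R}) : LL p^`() = LL (p * Vp).
Proof.
have -> : p^`() = (p^`() - p * Vp) + p * Vp by rewrite subrK.
rewrite LL_D (_ : LL (p^`() - p * Vp) = 0) ?add0r //.
by rewrite /LL /Rintegral int_deriv_zero.
Qed.

Lemma LL_pos : 0 < LL 1.
Proof.
rewrite /LL /Rintegral.
have fin := integrable_fin_num measurableT (int_pw 1).
apply: fine_gt0; apply/andP; split; last first.
  by move: fin => /fin_numPlt /andP[].
pose c := expR (- (1 + `|tau| + `|t|)).
have c0 : 0 < c := expR_gt0 _.
have mI : measurable (`[0%R, 1%R]%classic : set R) := measurable_itv _.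
apply: (@lt_le_trans _ _ (\int[mu]_(x in `[0%R, 1%R]) (cst c%:E) x)%E).
  have HL := @lebesgue_measure_itv R `[0%R, 1%R]. rewrite /= lte_fin ltr01 oppr0 adde0 in HL.
  rewrite integral_cst //.
  have H : (0%R < c%:E * mu (`[0%R, 1%R]%classic))%E by rewrite HL mule1 lte_fin.
  exact: H.
apply: (@le_trans _ _ (\int[mu]_(x in `[0%R, 1%R]) ((1%:P).[x] * weight tau t x)%:E)%E).
  apply: ge0_le_integral => //.
  - by move=> x _; rewrite lee_fin ltW.
  - exact: measurable_funTS (meas_pw 1).
  - move=> x; rewrite /= in_itv /= => /andP[x0 x1].
    rewrite hornerC mul1r lee_fin /c /weight ler_expR.
    have h2 : x ^+ 2 <= 1 by rewrite expr_le1.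
    have h4 : x ^+ 4 <= 1 by rewrite expr_le1.
    have h6 : x ^+ 6 <= 1 by rewrite expr_le1.
    have g2 : 0 <= x ^+ 2 by rewrite exprn_ge0.
    have g4 : 0 <= x ^+ 4 by rewrite exprn_ge0.
    have ta : - `|tau| <= tau by rewrite lerNl -normrN ler_norm.
    have tb : - `|t| <= t by rewrite lerNl -normrN ler_norm.
    have ha := normr_ge0 tau; have hb := normr_ge0 t.
    nra.
apply: ge0_subset_integral => //.
- exact: meas_pw.
- move=> x _; rewrite hornerC mul1r lee_fin /weight; exact: expR_ge0.
Qed.

End Ana.

Theorem theorem4p2 (R : realType) (tau t : R) (P : nat -> {poly R})
  (beta : nat -> R) :
  monic_OPS tau t P ->
  recurrence_coeffs P beta ->
  (forall n, (1 <= n)%N -> 0 < beta n) ->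
  forall n : nat, (1 <= n)%N -> forall x : R,
    let An := beta n * (6 * x ^+ 4 - 4 * tau * x ^+ 2 - 2 * t
                        + (6 * x ^+ 2 - 4 * tau) * (beta n + beta n.+1))
              + 6 * beta n * (beta n * (beta n.-1 + beta n + beta n.+1)
                              + beta n.+1 * (beta n + beta n.+1 + beta n.+2)) in
    let Bn := beta n * (6 * x ^+ 3 - 4 * tau * x
                        + 6 * x * (beta n.-1 + beta n + beta n.+1)) in
    (P n)^`().[x] = - Bn * (P n).[x] + An * (P n.-1).[x].
Proof.
move=> [HP Horth] [b0 [P1 Prec]] bpos n n1 x.
case: n n1 => [//|m] _.
apply: (@main_alg R tau t P beta (LL tau t)).
- exact: LL_D.
- exact: LL_Z.
- by move=> i j hij; apply: LL_orth; exact: Horth.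
- exact: LL_pos.
- exact: LL_IBP.
- by move=> i; case: (HP i).
- by move=> i; case: (HP i).
- exact: b0.
- exact: P1.
- exact: Prec.
- exact: bpos.
Qed.
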